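(* Let $\mathcal F=(\mathcal A,U,\varphi)$ be a sequential formalism, let $\mathcal S,\mathcal S'\subseteq\mathcal A$, and let $H$ be a refinement from $\mathcal S$ to $\mathcal S'$. Assume: (A1) $\mathcal S$ is algebraically stable through $H$; (A2) every algebraically consistent network over $\mathcal S'$ is satisfiable. Then every algebraically consistent network over $\mathcal S$ is satisfiable. If, in addition, $\mathcal S$ is a $\Rsh$-closed $\diamond\cap$-closed subset, then $\mathcal S$ is algebraically tractable.
   Context: A finite non-associative algebra is a tuple $(\mathcal A,\cup,\neg,\emptyset,\mathcal B,\diamond,\overline{\cdot},e)$ where $(\mathcal A,\cup,\neg,\emptyset,\mathcal B)$ is a finite Boolean algebra (with $x\cap y=\neg(\neg x\cup\neg y)$) and for all $x,y,z$: $\overline{\overline x}=x$, $\overline{x\cup y}=\overline x\cup\overline y$, $\overline{x\diamond y}=\overline y\diamond\overline x$, $e\diamond x=x\diamond e=x$, $x\diamond(y\cup z)=(x\diamond y)\cup(x\diamond z)$, $(x\diamond y)\cap\overline z=\emptyset\iff(y\diamond z)\cap\overline x=\emptyset$. $\mathcal B$ is the universal relation; $r\subseteq r'$ means $r\cup r'=r'$; atoms are basic relations. A projection operator from $\mathcal A$ to $\mathcal A'$ is a map $\Rsh$ with $\Rsh(r\cup r')=\Rsh r\cup\Rsh r'$, $\Rsh\overline r=\overline{\Rsh r}$. A finite multi-algebra is a product $\mathcal A_1\times\cdots\times\mathcal A_m$ of finite non-associative algebras with projection operators $\Rsh_i^j:\mathcal A_i\to\mathcal A_j$ for all distinct $i,j$.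 Relations $R=(R_1,\dots,R_m)$; basic if all $R_i$ are atoms; universal relation $\mathcal B=(\mathcal B_1,\dots,\mathcal B_m)$; $\subseteq,\diamond,\cap,\cup,\overline{\cdot}$ componentwise; $B\in R$ means $B$ basic, $B\subseteq R$. $R$ is closed under projection if $R_j\subseteq\Rsh_i^jR_i$ for all distinct $i,j$; the projection closure $\Rsh R$ is obtained by repeatedly replacing $R_j$ by $R_j\cap\Rsh_i^jR_i$ until a fixed point. A sequential formalism is $(\mathcal A,U,\varphi)$ with $\mathcal A$ a finite multi-algebra, $U\ne\emptyset$, $\varphi:\mathcal A\to 2^{U\times U}$ with $\varphi(\Rsh R)=\varphi(R)$, $\varphi(\overline R)=\varphi(R)^{-1}$, $\varphi((\emptyset,\dots,\emptyset))=\emptyset$, $\varphi(R\diamond R')\supseteq(\varphi(R)\circ\varphi(R'))\cap\varphi(\mathcal B)$, $\varphi(R\cap R')=\varphi(R)\cap\varphi(R')$, $\varphi(R)=\bigcup_{B\in R}\varphi(B)$. A network over $\mathcal S\subseteq\mathcal A$ is a finite set $E$ of variables with $N^{xy}\in\mathcal S$ for all distinct $x,y\in E$, $N^{yx}=\overline{N^{xy}}$; slices $N_i^{xy}=(N^{xy})_i$. A solution is $(u_x)_{x\in E}\subseteq U$ with $(u_x,u_y)\in\varphi(N^{xy})$ for all distinct $x,y$; $N$ is satisfiable if it has one. $N$ is trivially inconsistent if some $N_i^{xy}=\emptyset$; closed under composition if $N^{xz}\subseteq N^{xy}\diamond N^{yz}$ for all distinct $x,y,z$; closed under projection if every $N^{xy}$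 is; algebraically closed if both; algebraically consistent if algebraically closed and not trivially inconsistent. The algebraic closure of $N$ is obtained by repeatedly applying $N^{xz}\leftarrow\Rsh N^{xz}$ and $N^{xz}\leftarrow N^{xz}\cap(N^{xy}\diamond N^{yz})$ until a fixed point. A subset $\mathcal S$ is $\diamond\cap$-closed if $(R\diamond R')\cap R''\in\mathcal S$ for all $R,R',R''\in\mathcal S$; $\Rsh$-closed if $\Rsh R\in\mathcal S$ for all $R\in\mathcal S$; algebraically tractable if every network over $\mathcal S$ is satisfiable iff its algebraic closure is not trivially inconsistent. A refinement from $\mathcal S$ to $\mathcal S'$ is a function $H:\mathcal S\to\mathcal S'$ with $H(R)\subseteq R$ and $H(R)$ not trivially inconsistent (no empty component) whenever $R$ is not. $H(N)$ denotes the network obtained by replacing each $N^{xy}$ by $H(N^{xy})$. $\mathcal S$ is algebraically stable through $H$ if $H(N)$ is algebraically consistent for every algebraically consistent network $N$ over $\mathcal S$. *)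

(* Defs.v *)
From mathcomp Require Import all_boot.
From Stdlib Require Import Relations.Relation_Operators.
Set Implicit Arguments. Unset Strict Implicit. Unset Printing Implicit Defensive.

(* A finite Boolean algebra is represented as the powerset {set atom} of its
   (finite) set of atoms: union = :|:, complement = ~:, empty = set0,
   universal relation = setT; atoms (basic relations) are the singletons. *)
Record NAlg := {
  atom : finType;
  conv : {set atom} -> {set atom};
  comp : {set atom} -> {set atom} -> {set atom};
  ident : {set atom};
  conv_inv : forall x, conv (conv x) = x;
  conv_U : forall x y, conv (x :|: y) = conv x :|: conv y;
  conv_comp : forall x y, conv (comp x y) = comp (conv y) (conv x);
  ident_l : forall x, comp ident x = x;
  ident_r : forall x, comp x ident = x;
  comp_Ur : forall x y z, comp x (y :|: z) = comp x y :|: comp x z;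
  triangle : forall x y z,
    (comp x y :&: conv z = set0) <-> (comp y z :&: conv x = set0)
}.

Record MultiAlg := {
  arity : nat;
  alg : 'I_arity -> NAlg;
  proj : forall i j : 'I_arity, {set atom (alg i)} -> {set atom (alg j)};
  proj_U : forall i j, i != j -> forall r r',
      @proj i j (r :|: r') = @proj i j r :|: @proj i j r';
  proj_conv : forall i j, i != j -> forall r,
      @proj i j (conv r) = conv (@proj i j r)
}.

Section Rel.
Variable M : MultiAlg.

Definition mrel := forall i : 'I_(arity M), {set atom (@alg M i)}.

Definition req (R R' : mrel) := forall i, R i = R' i.
Definition rsub (R R' : mrel) := forall i, R i \subset R' i.
Definition rconv (R : mrel) : mrel := fun i => conv (R i).
Definition rcomp (R R' : mrel) : mrel := fun i => comp (R i) (R' i).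
Definition rcap (R R' : mrel) : mrel := fun i => R i :&: R' i.
Definition rempty : mrel := fun i => set0.
Definition runiv : mrel := fun i => setT.
Definition basic (B : mrel) := forall i, #|B i| = 1%N.
Definition triv_incons_rel (R : mrel) := exists i, R i = set0.

Definition proj_closed (R : mrel) :=
  forall i j : 'I_(arity M), i != j -> R j \subset @proj M i j (R i).

Definition proj_step (R R' : mrel) :=
  exists i j : 'I_(arity M), i != j /\
    R' j = R j :&: @proj M i j (R i) /\ (forall k, k != j -> R' k = R k).

Definition ProjClosure (R R' : mrel) :=
  clos_refl_trans mrel proj_step R R' /\ proj_closed R'.

Definition net (E : finType) := E -> E -> mrel.

Definition network_over (S : mrel -> Prop) (E : finType) (N : net E) :=
  (forall x y, x != y -> S (N x y)) /\
  (forall x y, x != y -> req (N y x) (rconv (N x y))).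

Definition triv_incons (E : finType) (N : net E) :=
  exists x y, x != y /\ triv_incons_rel (N x y).

Definition comp_closed (E : finType) (N : net E) :=
  forall x y z, x != y -> y != z -> x != z ->
    rsub (N x z) (rcomp (N x y) (N y z)).

Definition net_proj_closed (E : finType) (N : net E) :=
  forall x y, x != y -> proj_closed (N x y).

Definition alg_closed (E : finType) (N : net E) :=
  comp_closed N /\ net_proj_closed N.

Definition alg_consistent (E : finType) (N : net E) :=
  alg_closed N /\ ~ triv_incons N.

(* one step of algebraic closure, applied to N^{xz} (and, to keep
   N^{zx} = converse of N^{xz}, the converse update on N^{zx}) *)
Definition net_step (E : finType) (N N' : net E) :=
  exists x z, x != z /\ exists R' : mrel,
    (ProjClosure (N x z) R' \/
     exists y, y != x /\ y != z /\ req R' (rcap (N x z) (rcomp (N x y) (N y z))))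
    /\ req (N' x z) R' /\ req (N' z x) (rconv R')
    /\ (forall a b, (a, b) != (x, z) -> (a, b) != (z, x) -> req (N' a b) (N a b)).

Definition alg_closure (E : finType) (N N' : net E) :=
  clos_refl_trans (net E) (@net_step E) N N' /\ alg_closed N'.

Definition diamond_cap_closed (S : mrel -> Prop) :=
  forall R R' R'', S R -> S R' -> S R'' -> S (rcap (rcomp R R') R'').

Definition proj_closed_set (S : mrel -> Prop) :=
  forall R R', S R -> ProjClosure R R' -> S R'.

Definition refinement (S S' : mrel -> Prop) (H : mrel -> mrel) :=
  forall R, S R ->
    S' (H R) /\ rsub (H R) R /\ (~ triv_incons_rel R -> ~ triv_incons_rel (H R)).

Definition Hnet (H : mrel -> mrel) (E : finType) (N : net E) : net E :=
  fun x y => H (N x y).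

Definition alg_stable (S S' : mrel -> Prop) (H : mrel -> mrel) :=
  forall (E : finType) (N : net E), network_over S N -> alg_consistent N ->
    network_over S' (Hnet H N) /\ alg_consistent (Hnet H N).

End Rel.

Record SeqForm := {
  sf_M : MultiAlg;
  U : Type;
  U_ne : inhabited U;
  phi : mrel sf_M -> U -> U -> Prop;
  phi_proj : forall R R', ProjClosure R R' -> forall u v, phi R' u v <-> phi R u v;
  phi_conv : forall R u v, phi (rconv R) u v <-> phi R v u;
  phi_empty : forall u v, ~ phi (@rempty sf_M) u v;
  phi_comp : forall R R' u v w, phi R u v -> phi R' v w ->
      phi (@runiv sf_M) u w -> phi (rcomp R R') u w;
  phi_cap : forall R R' u v, phi (rcap R R') u v <-> phi R u v /\ phi R' u v;
  phi_basic : forall R u v,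
      phi R u v <-> exists B, basic B /\ rsub B R /\ phi B u v
}.

Definition solution (F : SeqForm) (E : finType) (N : net (sf_M F) E)
  (u : E -> U F) := forall x y, x != y -> phi (N x y) (u x) (u y).

Definition satisfiable (F : SeqForm) (E : finType) (N : net (sf_M F) E) :=
  exists u, solution N u.

Definition alg_tractable (F : SeqForm) (S : mrel (sf_M F) -> Prop) :=
  forall (E : finType) (N : net (sf_M F) E), network_over S N ->
    forall N', alg_closure N N' -> (satisfiable N <-> ~ triv_incons N').

(* Main.v *)
Require Import Defs.
From mathcomp Require Import all_boot.
From Stdlib Require Import Relations.Relation_Operators FunctionalExtensionality.
Set Implicit Arguments. Unset Strict Implicit. Unset Printing Implicit Defensive.

Lemma eq_rel (M : MultiAlg) (R R' : mrel M) : req R R' -> R = R'.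
Proof. move=> h; exact: functional_extensionality_dep h. Qed.

Lemma conv_mono (A : NAlg) (x y : {set atom A}) : x \subset y -> conv x \subset conv y.
Proof. move=> /setUidPr h; rewrite -h conv_U; exact: subsetUl. Qed.

Lemma conv_I (A : NAlg) (x y : {set atom A}) : conv (x :&: y) = conv x :&: conv y.
Proof.
apply/eqP; rewrite eqEsubset subsetI !conv_mono ?subsetIl ?subsetIr //=.
have h : conv (conv x :&: conv y) \subset x :&: y.
  rewrite subsetI; apply/andP; split.
    by rewrite -{2}(conv_inv x); apply: conv_mono; rewrite subsetIl.
  by rewrite -{2}(conv_inv y); apply: conv_mono; rewrite subsetIr.
by have := conv_mono h; rewrite conv_inv.
Qed.

Lemma rconvK (M : MultiAlg) (R : mrel M) : rconv (rconv R) = R.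
Proof. apply: eq_rel => i; exact: conv_inv. Qed.

Lemma proj_step_conv (M : MultiAlg) (R R' : mrel M) :
  proj_step R R' -> proj_step (rconv R) (rconv R').
Proof.
move=> [i [j [ij [e1 e2]]]]; exists i, j; split => //; split.
  by rewrite /rconv e1 conv_I proj_conv.
by move=> k kj; rewrite /rconv e2.
Qed.

Lemma proj_closed_conv (M : MultiAlg) (R : mrel M) :
  proj_closed R -> proj_closed (rconv R).
Proof. move=> h i j ij; rewrite /rconv proj_conv //; exact: conv_mono (h i j ij). Qed.

Lemma ProjClosure_conv (M : MultiAlg) (R R' : mrel M) :
  ProjClosure R R' -> ProjClosure (rconv R) (rconv R').
Proof.
move=> [h1 h2]; split; last exact: proj_closed_conv.
elim: h1 => [a b st|a|a b c _ IH1 _ IH2].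
- by apply: rt_step; apply: proj_step_conv.
- exact: rt_refl.
- exact: rt_trans IH1 IH2.
Qed.

Lemma ProjClosure_sub (M : MultiAlg) (R R' : mrel M) :
  ProjClosure R R' -> rsub R' R.
Proof.
move=> [h1 _]; elim: h1 => [a b st|a|a b c _ IH1 _ IH2].
- move: st => [i [j [ij [e1 e2]]]] k.
  case: (eqVneq k j) => [->|kj]; first by rewrite e1 subsetIl.
  by rewrite e2.
- by move=> k.
- move=> k; exact: subset_trans (IH2 k) (IH1 k).
Qed.

Lemma rconv_capcomp (M : MultiAlg) (A B C : mrel M) :
  rconv (rcap A (rcomp B C)) = rcap (rconv A) (rcomp (rconv C) (rconv B)).
Proof. apply: eq_rel => i; by rewrite /rconv /rcap /rcomp conv_I conv_comp. Qed.

Lemma phi_mono (F : SeqForm) (R R' : mrel (sf_M F)) u v :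
  rsub R R' -> phi R u v -> phi R' u v.
Proof.
move=> s /phi_basic [B [hB [sB pB]]]; apply/phi_basic; exists B; split => //; split => //.
move=> i; exact: subset_trans (sB i) (s i).
Qed.

Section Steps.
Variables (M : MultiAlg) (E : finType) (S : mrel M -> Prop).

Lemma step_inv (N N' : net M E) : proj_closed_set S -> diamond_cap_closed S ->
  network_over S N -> net_step N N' ->
  network_over S N' /\ (forall a b, a != b -> rsub (N' a b) (N a b)).
Proof.
move=> PC DC [hS hC] [x [z [xz [R' [hR [e1 [e2 eo]]]]]]].
have E1 := eq_rel e1; have E2 := eq_rel e2.
have zx : z != x by rewrite eq_sym.
have capC : forall A B : mrel M, rcap A B = rcap B A.
  by move=> A B; apply: eq_rel => i; exact: setIC.
have SR : S R'.
  case: hR => [pc|[y [yx [yz e]]]]; first exact: PC (hS x z xz) pc.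
  rewrite (eq_rel e) capC; apply: DC; apply: hS => //; by rewrite eq_sym.
have SR2 : S (rconv R').
  case: hR => [pc|[y [yx [yz e]]]].
    have := ProjClosure_conv pc; rewrite -(eq_rel (hC x z xz)); exact: PC (hS z x zx).
  have xy : x != y by rewrite eq_sym.
  rewrite (eq_rel e) rconv_capcomp -(eq_rel (hC x z xz)) -(eq_rel (hC y z yz))
    -(eq_rel (hC x y xy)) capC.
  apply: DC; apply: hS => //; by rewrite eq_sym.
have sub : rsub R' (N x z).
  case: hR => [pc|[y [yx [yz e]]]]; first exact: ProjClosure_sub pc.
  by rewrite (eq_rel e) => i; rewrite subsetIl.
split; first split.
- move=> a b ab.
  case: (eqVneq (a,b) (x,z)) => [[-> ->]|n1]; first by rewrite E1.
  case: (eqVneq (a,b) (z,x)) => [[-> ->]|n2]; first by rewrite E2.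
  by rewrite (eq_rel (eo a b n1 n2)); exact: hS.
- move=> a b ab.
  case: (eqVneq (a,b) (x,z)) => [[-> ->]|n1]; first by rewrite E1 E2.
  case: (eqVneq (a,b) (z,x)) => [[-> ->]|n2]; first by rewrite E1 E2 rconvK.
  have n3 : (b,a) != (x,z) by move: n2; rewrite !xpair_eqE andbC.
  have n4 : (b,a) != (z,x) by move: n1; rewrite !xpair_eqE andbC.
  by rewrite (eq_rel (eo a b n1 n2)) (eq_rel (eo b a n3 n4)); exact: hC.
- move=> a b ab.
  case: (eqVneq (a,b) (x,z)) => [[-> ->]|n1]; first by rewrite E1.
  case: (eqVneq (a,b) (z,x)) => [[-> ->]|n2].
    by rewrite E2 (eq_rel (hC x z xz)) => i; apply: conv_mono; exact: sub.
  by rewrite (eq_rel (eo a b n1 n2)).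
Qed.

Lemma closure_inv (N N' : net M E) : proj_closed_set S -> diamond_cap_closed S ->
  network_over S N -> clos_refl_trans (net M E) (@net_step M E) N N' ->
  network_over S N' /\ (forall a b, a != b -> rsub (N' a b) (N a b)).
Proof.
move=> PC DC hN cl; elim: cl hN => [a b st|a|a b c _ IH1 _ IH2] hN.
- exact: step_inv.
- by split => // x y _ i.
- have [hb s1] := IH1 hN; have [hc s2] := IH2 hb; split => // x y xy i.
  exact: subset_trans (s2 x y xy i) (s1 x y xy i).
Qed.
End Steps.

Lemma step_sol (F : SeqForm) (E : finType) (N N' : net (sf_M F) E) u :
  net_step N N' -> solution N u -> solution N' u.
Proof.
move=> [x [z [xz [R' [hR [e1 [e2 eo]]]]]]] hu.
have E1 := eq_rel e1; have E2 := eq_rel e2.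
have PR : phi R' (u x) (u z).
  case: hR => [pc|[y [yx [yz e]]]]; first by apply/(phi_proj pc); exact: hu.
  rewrite (eq_rel e); apply/phi_cap; split; first exact: hu.
  apply: (@phi_comp F _ _ _ (u y)); first (apply: hu; by rewrite eq_sym).
    exact: hu.
  by apply: phi_mono (hu x z xz) => i; exact: subsetT.
move=> a b ab.
case: (eqVneq (a,b) (x,z)) => [[-> ->]|n1]; first by rewrite E1.
case: (eqVneq (a,b) (z,x)) => [[-> ->]|n2]; first by rewrite E2; apply/phi_conv.
by rewrite (eq_rel (eo a b n1 n2)); exact: hu.
Qed.

Lemma closure_sol (F : SeqForm) (E : finType) (N N' : net (sf_M F) E) u :
  clos_refl_trans (net (sf_M F) E) (@net_step (sf_M F) E) N N' ->
  solution N u -> solution N' u.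
Proof.
move=> cl; elim: cl => [a b st|a|a b c _ IH1 _ IH2] //; first exact: step_sol.
by move=> h; apply: IH2; apply: IH1.
Qed.

Theorem mainTheorem2 (F : SeqForm) (S S' : mrel (sf_M F) -> Prop)
  (H : mrel (sf_M F) -> mrel (sf_M F))
  (hH : refinement S S' H)
  (A1 : alg_stable S S' H)
  (A2 : forall (E : finType) (N : net (sf_M F) E),
          network_over S' N -> alg_consistent N -> satisfiable N) :
  (forall (E : finType) (N : net (sf_M F) E),
      network_over S N -> alg_consistent N -> satisfiable N) /\
  (proj_closed_set S -> diamond_cap_closed S -> alg_tractable S).
Proof.
have part1 : forall (E : finType) (N : net (sf_M F) E),
      network_over S N -> alg_consistent N -> satisfiable N.
  move=> E N hN hc; have [hN' hc'] := A1 E N hN hc.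
  have [u hu] := A2 _ _ hN' hc'.
  exists u => x y xy; apply: phi_mono (hu x y xy).
  exact: (hH _ (hN.1 x y xy)).2.1.
split => // PC DC E N hN N' [cl ac]; split.
- move=> [u hu] [x [y [xy [i e]]]].
  have := closure_sol cl hu xy; move/phi_basic => [B [hB [sB _]]].
  have := sB i; rewrite e subset0 => /eqP B0.
  by have := hB i; rewrite B0 cards0.
- move=> nt; have [hN' sub] := closure_inv PC DC hN cl.
  have [u hu] := part1 E N' hN' (conj ac nt).
  by exists u => x y xy; apply: phi_mono (sub x y xy) (hu x y xy).
Qed.
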